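(* Let $f\in\mathbb{K}[S_M]$ and let $G$ be a set of nonzero polynomials in $\mathbb{K}[S_M]$. The multivariate division algorithm of $f$ by $G$ with respect to the sparse order $\prec$, using the divisibility relation $\mid_\delta$, terminates. Moreover, if $G$ is a sparse Gröbner basis of an ideal $I\subset\mathbb{K}[S_M]$ with respect to $\prec$ and $f\equiv f'\pmod I$, then the remainders of the division algorithm for $f$ and for $f'$ coincide, and this remainder is the same for any sparse Gröbner basis of $I$ with respect to $\prec$.
   Context: Let $\mathbb{K}$ be a field of characteristic $0$ and $M\subset\mathbb{R}^n$ a polytope with $0\in M$. Let $S_M\subset\mathbb{Z}^n$ be the affine semigroup generated by $M\cap\mathbb{Z}^n$ and $S_M^h\subset\mathbb{Z}^{n+1}$ the affine semigroup generated by $\{(s,1):s\in M\cap\mathbb{Z}^n\}$; both are assumed pointed (no nonzero invertible elements). For an affine semigroup $S$, $\mathbb{K}[S]$ is the semigroup algebra with $\mathbb{K}$-basis the monomials $X^s$, $s\in S$, and $X^sX^t=X^{s+t}$. $\mathbb{K}[S_M^h]$ is graded by $\deg X^{(s,d)}=d$. The dehomogenization $\chi:\mathbb{K}[S_M^h]\to\mathbb{K}[S_M]$ is the $\mathbb{K}$-algebra epimorphism $X^{(s,d)}\mapsto X^s$. The affine degree $\delta^A(X^s)$ of a monomial of $\mathbb{K}[S_M]$ is the least $d\in\mathbb{N}$ with $(s,d)\in S_M^h$; for $f=\sum c_sX^s\neq0$, $\delta^A(f)=\max\{\delta^A(X^s):c_s\neq0\}$. The homogenization of $f=\sum c_sX^s$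 is $\chi^{-1}(f)=\sum c_sX^{(s,\delta^A(f))}$. The sparse degree of $f\in\mathbb{K}[S_M^h]$ is $\delta(f):=\delta^A(\chi(f))$. Fix a monomial order $<_M$ on $\mathbb{K}[S_M]$. The sparse order $\prec$ on monomials of $\mathbb{K}[S_M]$: $X^s\prec X^r$ iff $\delta^A(X^s)<\delta^A(X^r)$, or $\delta^A(X^s)=\delta^A(X^r)$ and $X^s<_MX^r$. Divisibility: for monomials of $\mathbb{K}[S_M^h]$, $X^{(s,d_s)}\mid_\delta X^{(r,d_r)}$ if there is a monomial $X^{(t,d_t)}\in\mathbb{K}[S_M^h]$ with $X^{(s,d_s)}X^{(t,d_t)}=X^{(r,d_r)}$ and $\delta(X^{(s,d_s)})+\delta(X^{(t,d_t)})=\delta(X^{(r,d_r)})$; for monomials of $\mathbb{K}[S_M]$, $X^s\mid_\delta X^r$ iff $\chi^{-1}(X^s)\mid_\delta\chi^{-1}(X^r)$. A sparse Gröbner basis of an ideal $I\subset\mathbb{K}[S_M]$ w.r.t. $\prec$ is a subset of $I$ generating $I$ such that for every nonzero $f\in I$ some element $g$ of it satisfies $\mathrm{LM}_\prec(g)\mid_\delta\mathrm{LM}_\prec(f)$. The division algorithm of $f$ by $G$: set $p:=f$, $r:=0$; while $p\neq0$: if there is $g\in G$ with $\mathrm{LM}_\prec(g)\mid_\delta\mathrm{LM}_\prec(p)$, write $\mathrm{LM}_\prec(p)=X^t\,\mathrm{LM}_\prec(g)$ as in the definition of $\mid_\delta$ and replace $p$ by $p-\frac{\mathrm{LC}(p)}{\mathrm{LC}(g)}X^tg$;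 otherwise move the leading term of $p$ to $r$. The output is the remainder $r$. *)

(* Defs.v *)
From mathcomp Require Import all_boot all_algebra.
From mathcomp Require Import Rstruct.
From Stdlib Require Import ClassicalEpsilon.

Set Implicit Arguments.
Unset Strict Implicit.
Unset Printing Implicit Defensive.

Import GRing.Theory.
Local Open Scope ring_scope.

Notation R := Rdefinitions.R.

Section Sparse.
Variable n : nat.

Notation exps := 'rV[int]_n.

Definition inPolytope (V : seq 'rV[R]_n) (x : 'rV[R]_n) : Prop :=
  exists lam : 'I_(size V) -> R,
    (forall i, 0 <= lam i) /\ \sum_i lam i = 1 /\
    x = \sum_i lam i *: V`_i.

Definition latticePt (V : seq 'rV[R]_n) (z : exps) : Prop :=
  inPolytope V (map_mx (fun k : int => k%:~R) z).

Definition inSM (V : seq 'rV[R]_n) (s : exps) : Prop :=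
  exists zs : seq exps, (forall z, z \in zs -> latticePt V z) /\
    s = \sum_(z <- zs) z.

(* (s, d) \in S_M^h : the affine semigroup generated by the (z, 1),
   z \in M \cap Z^n.  (Its elements have nonnegative last coordinate,
   so we index them by pairs (s, d) with d : nat.) *)
Definition inShM (V : seq 'rV[R]_n) (s : exps) (d : nat) : Prop :=
  exists zs : seq exps, (forall z, z \in zs -> latticePt V z) /\
    size zs = d /\ s = \sum_(z <- zs) z.

Definition SM_pointed (V : seq 'rV[R]_n) : Prop :=
  forall s, inSM V s -> inSM V (- s) -> s = 0.

Definition isAffDeg (V : seq 'rV[R]_n) (s : exps) (d : nat) : Prop :=
  inShM V s d /\ forall d', inShM V s d' -> (d <= d')%N.

Definition affdeg (V : seq 'rV[R]_n) (s : exps) : nat :=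
  epsilon (inhabits 0%N) (isAffDeg V s).

(* Divisibility |_delta between monomials X^(s,ds), X^(r,dr) of K[S_M^h];
   the sparse degree of the monomial X^(t,dt) is delta^A(X^t). *)
Definition hdvd (V : seq 'rV[R]_n) (s : exps) (ds : nat) (r : exps) (dr : nat)
  : Prop :=
  exists (t : exps) (dt : nat), inShM V t dt /\ s + t = r /\ (ds + dt = dr)%N /\
    (affdeg V s + affdeg V t = affdeg V r)%N.

(* Divisibility |_delta between monomials X^s, X^r of K[S_M], via the
   homogenizations chi^{-1}(X^s) = X^(s, delta^A(X^s)). *)
Definition sdvd (V : seq 'rV[R]_n) (s r : exps) : Prop :=
  hdvd V s (affdeg V s) r (affdeg V r).

Definition monomial_order (V : seq 'rV[R]_n) (ltM : exps -> exps -> Prop)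
  : Prop :=
  [/\ (forall s, inSM V s -> ~ ltM s s),
      (forall s t u, inSM V s -> inSM V t -> inSM V u ->
          ltM s t -> ltM t u -> ltM s u),
      (forall s t, inSM V s -> inSM V t -> s <> t -> ltM s t \/ ltM t s),
      (forall s t u, inSM V s -> inSM V t -> inSM V u ->
          ltM s t -> ltM (s + u) (t + u)) &
      (forall s, inSM V s -> s <> 0 -> ltM 0 s)].

Definition sprec (V : seq 'rV[R]_n) (ltM : exps -> exps -> Prop) (s r : exps)
  : Prop :=
  (affdeg V s < affdeg V r)%N \/ (affdeg V s = affdeg V r /\ ltM s r).

(* Polynomials: K-valued coefficient functions on Z^n.  An element of
   K[S_M] is such a function with finite support contained in S_M;
   f corresponds to sum_s f(s) X^s. *)
Variable K : fieldType.

Definition spoly := exps -> K.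

Definition pzero : spoly := fun _ => 0.
Definition padd (f g : spoly) : spoly := fun u => f u + g u.
Definition psub (f g : spoly) : spoly := fun u => f u - g u.

Definition inKS (V : seq 'rV[R]_n) (f : spoly) : Prop :=
  (exists D : seq exps, forall s, f s != 0 -> s \in D) /\
  (forall s, f s != 0 -> inSM V s).

Definition supp (f : spoly) : seq exps :=
  epsilon (inhabits [::]) (fun D : seq exps => uniq D /\ forall s, (f s != 0) = (s \in D)).

Definition pmul (f g : spoly) : spoly := fun u =>
  \sum_(s <- supp f) \sum_(t <- supp g | s + t == u) f s * g t.

Definition pshift (t : exps) (g : spoly) : spoly := fun u => g (u - t).

Definition isLM (V : seq 'rV[R]_n) (ltM : exps -> exps -> Prop) (p : spoly) (m : exps)
  : Prop :=
  p m != 0 /\ forall s, p s != 0 -> s <> m -> sprec V ltM s m.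

Definition LM (V : seq 'rV[R]_n) (ltM : exps -> exps -> Prop) (p : spoly) : exps :=
  epsilon (inhabits 0) (isLM V ltM p).

Definition LC (V : seq 'rV[R]_n) (ltM : exps -> exps -> Prop) (p : spoly) : K :=
  p (LM V ltM p).

Definition LT (V : seq 'rV[R]_n) (ltM : exps -> exps -> Prop) (p : spoly) : spoly :=
  fun u => if u == LM V ltM p then LC V ltM p else 0.

Definition is_ideal (V : seq 'rV[R]_n) (I : spoly -> Prop) : Prop :=
  [/\ (forall f, I f -> inKS V f), I pzero,
      (forall f g, I f -> I g -> I (padd f g)) &
      (forall h f, inKS V h -> I f -> I (pmul h f))].

Definition generates (V : seq 'rV[R]_n) (G I : spoly -> Prop) : Prop :=
  forall f, I f <->
    exists (k : nat) (h g : 'I_k -> spoly),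
      (forall i, inKS V (h i) /\ G (g i)) /\
      f = (fun u => \sum_i pmul (h i) (g i) u).

Definition sparse_groebner (V : seq 'rV[R]_n) (ltM : exps -> exps -> Prop)
  (G I : spoly -> Prop) : Prop :=
  [/\ (forall g, G g -> I g), generates V G I &
      (forall f, I f -> f <> pzero ->
         exists g, G g /\ sdvd V (LM V ltM g) (LM V ltM f))].

(* The division algorithm.  States are pairs (p, r); one iteration of
   the while loop (executed while p <> 0) is the relation [div_step]. *)
Definition div_step (V : seq 'rV[R]_n) (ltM : exps -> exps -> Prop)
  (G : spoly -> Prop) (st st' : spoly * spoly) : Prop :=
  let: (p, r) := st in let: (p', r') := st' in
  p <> pzero /\
  ( (exists (g : spoly) (t : exps) (dt : nat),
        G g /\
        (* LM(p) = X^t LM(g) as in the definition of |_delta *)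
        inShM V t dt /\ LM V ltM g + t = LM V ltM p /\
        (affdeg V (LM V ltM g) + dt = affdeg V (LM V ltM p))%N /\
        (affdeg V (LM V ltM g) + affdeg V t = affdeg V (LM V ltM p))%N /\
        p' = psub p (fun u => (LC V ltM p / LC V ltM g) * pshift t g u) /\
        r' = r)
  \/ ((forall g, G g -> ~ sdvd V (LM V ltM g) (LM V ltM p)) /\
        p' = psub p (LT V ltM p) /\ r' = padd r (LT V ltM p)) ).

(* [div_run G st r]: some execution of the algorithm from state st stops
   (p = 0) with output remainder r. *)
Inductive div_run (V : seq 'rV[R]_n) (ltM : exps -> exps -> Prop)
  (G : spoly -> Prop) : spoly * spoly -> spoly -> Prop :=
| div_run_stop r : div_run V ltM G (pzero, r) r
| div_run_next st st' r :
    div_step V ltM G st st' -> div_run V ltM G st' r -> div_run V ltM G st r.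

Definition remainder (V : seq 'rV[R]_n) (ltM : exps -> exps -> Prop)
  (G : spoly -> Prop) (f r : spoly) : Prop :=
  div_run V ltM G (f, pzero) r.

Definition div_terminates (V : seq 'rV[R]_n) (ltM : exps -> exps -> Prop)
  (G : spoly -> Prop) (f : spoly) : Prop :=
  Acc (fun st' st => div_step V ltM G st st') (f, pzero).

End Sparse.

(* Main.v *)
Require Import Defs.
From mathcomp Require Import all_boot all_algebra Rstruct.
From Stdlib Require Import ClassicalEpsilon Classical FunctionalExtensionality.
From mathcomp Require Import ring zify lra.
Import GRing.Theory Num.Theory order.Order.TTheory.
Local Open Scope ring_scope.
Set Implicit Arguments.
Unset Strict Implicit.
Section S1.
Variable n : nat.
Variable V : seq 'rV[R]_n.
Notation exps := 'rV[int]_n.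

Lemma inShM_add s a t b : inShM V s a -> inShM V t b -> inShM V (s + t) (a + b)%N.
Proof.
move=> [zs [H1 [H2 H3]]] [zs' [H1' [H2' H3']]].
exists (zs ++ zs'); split; [|split].
- by move=> z; rewrite mem_cat => /orP[] ?; [apply: H1|apply: H1'].
- by rewrite size_cat H2 H2'.
- by rewrite big_cat /= H3 H3'.
Qed.

Lemma inSM_ShM s : inSM V s <-> exists d, inShM V s d.
Proof.
split; first by move=> [zs [H1 H2]]; exists (size zs), zs.
by move=> [d [zs [H1 [_ H2]]]]; exists zs.
Qed.

Lemma inSM_add s t : inSM V s -> inSM V t -> inSM V (s + t).
Proof.
move=> /inSM_ShM [a Ha] /inSM_ShM [b Hb]; apply/inSM_ShM; exists (a + b)%N.
exact: inShM_add.
Qed.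

Lemma inSM0 : inSM V 0.
Proof. by exists [::]; split => //; rewrite big_nil. Qed.

Lemma isAffDeg_ex s : inSM V s -> exists d, isAffDeg V s d.
Proof.
move=> /inSM_ShM [d Hd].
elim: d {-2}d (leqnn d) Hd => [|k IH] d Hdk Hd.
  exists d; split => // d' _; move: Hdk; rewrite leqn0 => /eqP ->; done.
case: (classic (exists d', inShM V s d' /\ (d' < d)%N)).
  move=> [d' [Hd' Hlt]]; apply: (IH d') => //; lia.
move=> Hno; exists d; split => // d' Hd'.
case: (leqP d d') => // Hlt; exfalso; apply: Hno; by exists d'.
Qed.

Lemma affdegP s : inSM V s -> isAffDeg V s (affdeg V s).
Proof.
move=> /isAffDeg_ex [d Hd]; rewrite /affdeg.
exact: (epsilon_spec (inhabits 0%N) (isAffDeg V s) (ex_intro _ d Hd)).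
Qed.

Lemma affdeg_sub s t : inSM V s -> inSM V t ->
  (affdeg V (s + t) <= affdeg V s + affdeg V t)%N.
Proof.
move=> Hs Ht.
have [Hs1 _] := affdegP Hs; have [Ht1 _] := affdegP Ht.
have Hst := inShM_add Hs1 Ht1.
have [_ H] := affdegP (inSM_add Hs Ht); exact: H.
Qed.

Variable ltM : exps -> exps -> Prop.
Hypothesis Hmo : monomial_order V ltM.

Lemma sprec_irr s : inSM V s -> ~ sprec V ltM s s.
Proof.
case: Hmo => Hirr _ _ _ _ Hs [|[_ H]]; first by rewrite ltnn.
exact: (Hirr s Hs).
Qed.

Lemma sprec_trans s t u : inSM V s -> inSM V t -> inSM V u ->
  sprec V ltM s t -> sprec V ltM t u -> sprec V ltM s u.
Proof.
case: Hmo => _ Htr _ _ _ Hs Ht Hu [H1|[H1 H1']] [H2|[H2 H2']].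
- left; lia.
- left; lia.
- left; lia.
- right; split; first by rewrite H1.
  exact: (Htr s t u).
Qed.

Lemma sprec_total s t : inSM V s -> inSM V t -> s <> t ->
  sprec V ltM s t \/ sprec V ltM t s.
Proof.
case: Hmo => _ _ Htot _ _ Hs Ht Hne.
case: (ltngtP (affdeg V s) (affdeg V t)) => H.
- by left; left.
- by right; left.
- case: (Htot s t Hs Ht Hne) => H'.
  + by left; right.
  + by right; right.
Qed.

Lemma max_ex (D : seq exps) : D <> [::] -> (forall s, s \in D -> inSM V s) ->
  exists2 m, m \in D & forall s, s \in D -> s <> m -> sprec V ltM s m.
Proof.
elim: D => [//|x D IH] _ HD.
case: D IH HD => [|y D] IH HD.
  exists x; first by rewrite mem_seq1.
  by move=> s; rewrite mem_seq1 => /eqP.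
have [|m Hm Hmax] := IH _ (fun s Hs => HD s (@mem_behead _ (x :: y :: D) _ Hs)) => //.
have Hx : inSM V x by apply: HD; rewrite mem_head.
have Hm' : inSM V m by apply: HD; rewrite inE Hm orbT.
case: (classic (x = m)) => [->|Hne].
  exists m; first by rewrite mem_head.
  by move=> s; rewrite inE => /orP[/eqP->//|]; apply: Hmax.
case: (sprec_total Hx Hm' Hne) => Hc.
  exists m; first by rewrite inE Hm orbT.
  by move=> s; rewrite inE => /orP[/eqP->//|]; apply: Hmax.
exists x; first by rewrite mem_head.
move=> s; rewrite inE => /orP[/eqP->//|Hs] Hsx.
case: (classic (s = m)) => [->//|Hsm].
apply: (sprec_trans _ Hm' Hx) => //; last by apply: Hmax.
by apply: HD; rewrite inE Hs orbT.
Qed.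

Variable K : fieldType.

Lemma LM_ex (p : spoly n K) : inKS V p -> p <> @pzero n K -> exists m, isLM V ltM p m.
Proof.
move=> [[D HD] HS] Hp.
have [s Hs] : exists s, p s != 0.
  apply: NNPP => H; apply: Hp; apply: functional_extensionality => s.
  by apply/eqP; apply: negbNE; apply/negP => Hs; apply: H; exists s.
have Hne : [seq x <- D | p x != 0] <> [::].
  move=> E; have : s \in [seq x <- D | p x != 0] by rewrite mem_filter Hs HD.
  by rewrite E.
have Hin : forall x, x \in [seq x <- D | p x != 0] -> inSM V x.
  by move=> x; rewrite mem_filter => /andP[/HS].
have [m Hm Hmax] := max_ex Hne Hin.
exists m; split; first by move: Hm; rewrite mem_filter => /andP[].
by move=> x Hx; apply: Hmax; rewrite mem_filter Hx HD.
Qed.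

Lemma LMP (p : spoly n K) : inKS V p -> p <> @pzero n K -> isLM V ltM p (LM V ltM p).
Proof.
move=> H1 H2; have [m Hm] := LM_ex H1 H2.
exact: (epsilon_spec (inhabits 0) (isLM V ltM p) (ex_intro _ m Hm)).
Qed.

End S1.
Section S2.
Variable n : nat.
Variable V : seq 'rV[R]_n.
Notation exps := 'rV[int]_n.

Lemma lat_bound : exists N : nat, forall z, latticePt V z -> forall j, `|z 0 j| < N%:Z.
Proof.
pose T : R := \sum_(i < size V) \sum_(j < n) `|V`_i 0 j|.
have T0 : 0 <= T by apply: sumr_ge0 => i _; apply: sumr_ge0 => j _.
have HT : forall (i : 'I_(size V)) j, `|V`_i 0 j| <= T.
  move=> i j; rewrite /T (bigD1 i) //= (bigD1 j) //=.
  rewrite -addrA lerDl addr_ge0 //; first by apply: sumr_ge0.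
  by apply: sumr_ge0 => k _; apply: sumr_ge0.
exists (Num.bound T) => z [lam [Hl0 [Hl1 Hz]]] j.
have E : (z 0 j)%:~R = \sum_i lam i * V`_i 0 j.
  have := congr1 (fun M : 'M[R]_(1, n) => M 0 j) Hz; rewrite /= mxE => ->.
  by rewrite summxE; apply: eq_bigr => i _; rewrite mxE.
have H1 : `|(z 0 j)%:~R : R| <= T.
  rewrite E; apply: le_trans (ler_norm_sum _ _ _) _.
  apply: le_trans (_ : \sum_i lam i * T <= T).
    apply: ler_sum => i _; rewrite normrM ger0_norm //.
    by apply: ler_wpM2l => //.
  by rewrite -mulr_suml Hl1 mul1r.
rewrite -(ltr_int R) intr_norm; apply: le_lt_trans H1 _.
have := archi_boundP T0; by rewrite pmulrn.
Qed.

Lemma box_list (N : nat) : exists L : seq exps,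
  forall z : exps, (forall j, `|z 0 j| < N%:Z) -> z \in L.
Proof.
exists [seq \row_j (((f j : nat)%:Z) - N%:Z) | f : {ffun 'I_n -> 'I_(N + N).+1} <- enum {ffun 'I_n -> 'I_(N + N).+1}].
move=> z Hz; apply/mapP.
exists [ffun j => inord (absz (z 0 j + N%:Z))]; first by rewrite mem_enum.
apply/rowP => j; rewrite !mxE ffunE inordK.
  rewrite abszE ger0_norm; first by rewrite addrK.
  have := Hz j; rewrite ltr_norml; lia.
have := Hz j; rewrite ltr_norml; lia.
Qed.

Lemma lat_list : exists Lat : seq exps, forall z, latticePt V z -> z \in Lat.
Proof.
have [N HN] := lat_bound; have [L HL] := box_list N.
by exists L => z Hz; apply: HL; apply: HN.
Qed.

Definition sums (Lat : seq exps) k :=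
  iter k (fun S => [seq x + y | x <- Lat, y <- S]) [:: 0].

Lemma sums_mem Lat : (forall z, latticePt V z -> z \in Lat) ->
  forall k s, inShM V s k -> s \in sums Lat k.
Proof.
move=> HL k s [zs [H1 [<- ->]]].
elim: zs H1 => [|z zs IH] H1 /=; first by rewrite big_nil mem_seq1.
rewrite big_cons; apply/allpairsP; exists (z, \sum_(j <- zs) j) => /=.
split => //; first by apply: HL; apply: H1; rewrite mem_head.
by apply: IH => x Hx; apply: H1; rewrite inE Hx orbT.
Qed.

Lemma deg_list d : exists L : seq exps, forall s, inSM V s -> (affdeg V s <= d)%N -> s \in L.
Proof.
have [Lat HL] := lat_list.
elim: d => [|d [L IH]].
  exists (sums Lat 0) => s Hs Hd; apply: sums_mem => //.
  by have [H _] := affdegP Hs; move: Hd; rewrite leqn0 => /eqP <-.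
exists (sums Lat d.+1 ++ L) => s Hs Hd; rewrite mem_cat.
case: (ltngtP (affdeg V s) d.+1) => H.
- by rewrite IH ?orbT.
- lia.
- apply/orP; left; apply: sums_mem => //.
  by have [H' _] := affdegP Hs; rewrite -H.
Qed.

Definition pb (P : Prop) : bool := if excluded_middle_informative P then true else false.
Lemma pbE P : pb P = true <-> P.
Proof. by rewrite /pb; case: excluded_middle_informative. Qed.

Lemma count_strict (T : eqType) (a b : pred T) (L : seq T) x :
  (forall y, a y -> b y) -> x \in L -> b x -> ~~ a x -> (count a L < count b L)%N.
Proof.
move=> Hab; elim: L => [//|y L IH]; rewrite inE => /orP[/eqP<-|Hx] Hb Ha /=.
  rewrite Hb (negbTE Ha) add0n add1n ltnS; apply: sub_count => z; exact: Hab.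
have := IH Hx Hb Ha.
case Hay: (a y); first by rewrite (Hab y Hay); lia.
case: (b y); lia.
Qed.

Variable ltM : exps -> exps -> Prop.
Hypothesis Hmo : monomial_order V ltM.

Definition Rel s m := inSM V s /\ inSM V m /\ sprec V ltM s m.

Lemma Rel_trans u s m : Rel u s -> Rel s m -> Rel u m.
Proof.
move=> [Hu [Hs H1]] [_ [Hm H2]]; split=> //; split=> //.
exact: (sprec_trans Hmo Hu Hs Hm).
Qed.

Lemma Rel_acc_aux k : forall m (L : seq exps), (forall s, Rel s m -> s \in L) ->
  (count (fun x => pb (Rel x m)) L <= k)%N -> Acc Rel m.
Proof.
elim: k => [|k IH] m L HL Hc; constructor => s Hs.
  have : (0 < count (fun x => pb (Rel x m)) L)%N.
    rewrite -has_count; apply/hasP; exists s; first exact: HL.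
    exact/pbE.
  lia.
apply: (IH s L).
  by move=> u Hu; apply: HL; apply: Rel_trans Hu Hs.
have : (count (fun x => pb (Rel x s)) L < count (fun x => pb (Rel x m)) L)%N.
  apply: (count_strict (x := s)).
  - by move=> y /pbE Hy; apply/pbE; apply: Rel_trans Hy Hs.
  - exact: HL.
  - exact/pbE.
  - apply/negP => /pbE [Hs' [_ H]].
    exact: (sprec_irr Hmo Hs' H).
lia.
Qed.

Lemma Rel_wf : well_founded Rel.
Proof.
move=> m.
case: (classic (inSM V m)) => Hm; last first.
  by constructor => s [_ [H _]].
have [L HL] := deg_list (affdeg V m).
apply: (Rel_acc_aux (k := count (fun x => pb (Rel x m)) L) (L := L)) => //.
move=> s [Hs [_ H]]; apply: HL => //.
by case: H => [H|[-> _]] //; apply: ltnW.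
Qed.

End S2.
Section S3.
Variable n : nat.
Variable V : seq 'rV[R]_n.
Notation exps := 'rV[int]_n.
Variable ltM : exps -> exps -> Prop.
Hypothesis Hmo : monomial_order V ltM.
Variable K : fieldType.
Notation poly := (spoly n K).

Lemma sum_uniq1 (L : seq exps) a (F : exps -> K) : uniq L ->
  \sum_(x <- L | x == a) F x = if a \in L then F a else 0.
Proof.
elim: L => [|y L IH] /=; first by rewrite big_nil.
move=> /andP[Hy HL]; rewrite big_cons inE IH //.
case: eqP => [E|Hne] /=; last by rewrite eq_sym; case: eqP.
by subst y; rewrite eqxx (negbTE Hy) addr0.
Qed.

Lemma suppP (h : poly) : (exists D : seq exps, forall s, h s != 0 -> s \in D) ->
  uniq (supp h) /\ forall s, (h s != 0) = (s \in supp h).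
Proof.
move=> [D HD]; rewrite /supp.
pose P := (fun D : seq exps => uniq D /\ forall s, (h s != 0) = (s \in D)).
suff : exists D, P D by move/(epsilon_spec (inhabits [::])).
exists (undup [seq x <- D | h x != 0]); split; first exact: undup_uniq.
move=> s; rewrite mem_undup mem_filter.
by case: (boolP (h s != 0)) => //= /HD ->.
Qed.

Lemma pmul_shift c t (g : poly) : (exists D : seq exps, forall s, g s != 0 -> s \in D) ->
  pmul (fun u => if u == t then c else 0) g = fun u => c * g (u - t).
Proof.
move=> Hg; apply: functional_extensionality => u; rewrite /pmul.
have [Hgu Hgm] := suppP Hg.
have Hh : exists D : seq exps, forall s, (fun u => if u == t then c else 0) s != 0 -> s \in D.
  by exists [:: t] => s /=; case: (s =P t) => [->|]; rewrite ?mem_seq1 ?eqxx.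
have [Hhu Hhm] := suppP Hh.
case: (eqVneq c 0) => [Hc|Hc].
  have -> : supp (fun u => if u == t then c else 0) = [::].
    case E: supp => [//|x l]; have := Hhm x; rewrite E mem_head.
    by rewrite Hc if_same eqxx.
  by rewrite Hc mul0r; exact: big_nil.
have -> : supp (fun u => if u == t then c else 0) = [:: t].
  apply: perm_small_eq => //.
  apply: uniq_perm => // x.
  by rewrite -Hhm mem_seq1; case: (x =P t) => _ /=; rewrite ?Hc ?eqxx.
rewrite big_seq1 eqxx.
rewrite (eq_bigl (fun t' => t' == u - t)); last first.
  move=> t'; apply/eqP/eqP => [<-|->]; first by rewrite [t + t']addrC addrK.
  by rewrite [t + _]addrC subrK.
rewrite -big_distrr /= sum_uniq1 //.
case: ifP => //; rewrite -Hgm => /negbFE/eqP ->; by rewrite mulr0.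
Qed.

Lemma nz_sub (a b : K) : a - b != 0 -> a != 0 \/ b != 0.
Proof.
case: (eqVneq a 0) => [->|]; last by left.
case: (eqVneq b 0) => [->|]; last by right.
by rewrite subr0 eqxx.
Qed.

Lemma nz_mul (a b : K) : a * b != 0 -> b != 0.
Proof. by case: (eqVneq b 0) => [->|//]; rewrite mulr0 eqxx. Qed.

Lemma inKS_shift (p g : poly) c t : inKS V p -> inKS V g -> inSM V t ->
  inKS V (psub p (fun u => c * pshift t g u)).
Proof.
move=> [[Dp HDp] HSp] [[Dg HDg] HSg] Ht; split.
  exists (Dp ++ map (fun s => s + t) Dg) => u; rewrite /psub /pshift mem_cat.
  case/nz_sub => [/HDp -> //|/nz_mul/HDg H].
  by apply/orP; right; apply/mapP; exists (u - t) => //; rewrite subrK.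
move=> u; rewrite /psub /pshift; case/nz_sub => [/HSp //|/nz_mul/HSg H].
by rewrite -(subrK t u); apply: inSM_add.
Qed.

Lemma LT_eq (p : poly) u : LT V ltM p u = if u == LM V ltM p then p u else 0.
Proof. by rewrite /LT /LC; case: eqP => [->|]. Qed.

Lemma inKS_subLT (p : poly) : inKS V p -> inKS V (psub p (LT V ltM p)).
Proof.
move=> [[D HD] HS]; split.
  exists D => u; rewrite /psub LT_eq; case: ifP => _; first by rewrite subrr eqxx.
  by rewrite subr0; apply: HD.
move=> u; rewrite /psub LT_eq; case: ifP => _; first by rewrite subrr eqxx.
by rewrite subr0; apply: HS.
Qed.

Lemma inKS_addLT (r p : poly) : inKS V r -> inKS V p -> inKS V (padd r (LT V ltM p)).
Proof.
move=> [[D HD] HS] [_ HSp]; split.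
  exists (LM V ltM p :: D) => u; rewrite /padd LT_eq inE.
  case: (u =P LM V ltM p) => [//|_]; rewrite addr0; exact: HD.
move=> u; rewrite /padd LT_eq; case: (u =P LM V ltM p) => [->|_]; last by rewrite addr0; apply: HS.
rewrite -[p _]opprK; case/nz_sub; first exact: HS.
by rewrite oppr_eq0; apply: HSp.
Qed.

End S3.
Section S4.
Variable n : nat.
Variable V : seq 'rV[R]_n.
Notation exps := 'rV[int]_n.
Variable ltM : exps -> exps -> Prop.
Hypothesis Hmo : monomial_order V ltM.
Variable K : fieldType.
Notation poly := (spoly n K).

Lemma sprec_shift s m t : inSM V s -> inSM V m -> inSM V t -> sprec V ltM s m ->
  (affdeg V m + affdeg V t)%N = affdeg V (m + t) -> sprec V ltM (s + t) (m + t).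
Proof.
move=> Hs Hm Ht H E.
have Hsub := affdeg_sub Hs Ht.
case: H => [H|[H1 H2]]; first by left; lia.
case: Hmo => _ _ _ Hc _.
have Hlt := Hc s m t Hs Hm Ht H2.
case: (ltngtP (affdeg V (s + t)) (affdeg V (m + t))) => H3.
- by left.
- lia.
- by right.
Qed.

Lemma step_dec (G : poly -> Prop) p r p' r' :
  (forall g, G g -> inKS V g /\ g <> @pzero n K) -> inKS V p ->
  div_step V ltM G (p, r) (p', r') ->
  inKS V p' /\ forall u, p' u != 0 -> Rel V ltM u (LM V ltM p).
Proof.
move=> HG Hp [Hp0 [[g [t [dt [Gg [Ht [E1 [E2 [E3 [-> _]]]]]]]]] | [Hnd [-> _]]]].
- have [Hgks Hg0] := HG g Gg.
  have [Hg1 Hg2] := LMP Hmo Hgks Hg0.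
  have [Hp1 Hp2] := LMP Hmo Hp Hp0.
  have Ht' : inSM V t by apply/inSM_ShM; exists dt.
  have HLg : inSM V (LM V ltM g) by apply: Hgks.2.
  have HLp : inSM V (LM V ltM p) by apply: Hp.2.
  have Hp' := inKS_shift (LC V ltM p / LC V ltM g) Hp Hgks Ht'.
  split => // u Hu; split; first by apply: Hp'.2.
  split => //.
  case: (u =P LM V ltM p) => [Eu|Hne].
    move: Hu; rewrite Eu /psub /pshift -E1 addrK /LC E1 divfK // subrr.
    by rewrite eqxx.
  case: (eqVneq (p u) 0) => [Hpu|Hpu]; last exact: Hp2.
  move: Hu; rewrite /psub /pshift Hpu sub0r oppr_eq0 => /nz_mul Hgu.
  have Hsne : u - t <> LM V ltM g by move=> E; apply: Hne; rewrite -E1 -E subrK.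
  have Hs := Hg2 _ Hgu Hsne.
  have := sprec_shift (Hgks.2 _ Hgu) HLg Ht' Hs.
  rewrite subrK E1; apply.
  exact: E3.
- have [Hp1 Hp2] := LMP Hmo Hp Hp0.
  have HLp : inSM V (LM V ltM p) by apply: Hp.2.
  have Hp' := inKS_subLT ltM Hp.
  split => // u Hu; split; first by apply: Hp'.2.
  split => //.
  move: Hu; rewrite /psub LT_eq; case: (u =P LM V ltM p) => [_|Hne].
    by rewrite subrr eqxx.
  by rewrite subr0 => Hu; apply: Hp2.
Qed.

Lemma terminates (G : poly -> Prop) f :
  (forall g, G g -> inKS V g /\ g <> @pzero n K) -> inKS V f ->
  div_terminates V ltM G f.
Proof.
move=> HG Hf.
have main : forall m, forall p, inKS V p -> (forall u, p u != 0 -> Rel V ltM u m) ->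
  forall r, Acc (fun st' st => div_step V ltM G st st') (p, r).
  move=> m; elim: (Rel_wf Hmo m) => {}m _ IH p Hp Hsupp r.
  constructor => [[p' r']] Hst.
  have [Hp' Hd] := step_dec HG Hp Hst.
  case: Hst => Hp0 _.
  have [Hp1 _] := LMP Hmo Hp Hp0.
  exact: (IH _ (Hsupp _ Hp1) p' Hp' Hd r').
constructor => [[p' r']] Hst.
have [Hp' Hd] := step_dec HG Hf Hst.
exact: (main _ p' Hp' Hd r').
Qed.

End S4.
Section S5.
Variable n : nat.
Variable V : seq 'rV[R]_n.
Notation exps := 'rV[int]_n.
Variable ltM : exps -> exps -> Prop.
Hypothesis Hmo : monomial_order V ltM.
Variable K : fieldType.
Notation poly := (spoly n K).

Definition reduced (G : poly -> Prop) (r : poly) :=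
  forall s, r s != 0 -> forall g, G g -> ~ sdvd V (LM V ltM g) s.

Lemma inKS_mono (c : K) t : inSM V t -> inKS V (fun u : exps => if u == t then c else 0).
Proof.
move=> Ht; split.
  by exists [:: t] => s /=; case: (s =P t) => [->|]; rewrite ?mem_seq1 ?eqxx.
by move=> s /=; case: (s =P t) => [->|] //; rewrite eqxx.
Qed.

Lemma I_shift (I : poly -> Prop) g c t : is_ideal V I -> I g -> inSM V t ->
  I (fun u => c * pshift t g u).
Proof.
move=> [H1 _ _ H4] Hg Ht.
rewrite /pshift -pmul_shift; first by apply: H4 => //; apply: inKS_mono.
by have [[D HD] _] := H1 _ Hg; exists D.
Qed.

Lemma I_neg (I : poly -> Prop) f : is_ideal V I -> I f -> I (fun u => - f u).
Proof.
move=> HI Hf; have := I_shift (-1) HI Hf (inSM0 V).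
have -> : (fun u => -1 * pshift 0 f u) = (fun u => - f u) :> poly; last by [].
by apply: functional_extensionality => u; rewrite /pshift subr0 mulN1r.
Qed.

Lemma run_inv (G I : poly -> Prop) : is_ideal V I -> (forall g, G g -> I g) ->
  forall st r, div_run V ltM G st r -> forall p r0, st = (p, r0) ->
  inKS V p -> inKS V r0 -> reduced G r0 ->
  [/\ inKS V r, reduced G r & I (psub (padd p r0) r)].
Proof.
move=> HI HGI; have [HIks HI0 HIadd HImul] := HI.
move=> st r; elim => {st r} [r|st [p' r0'] r Hst _ IH] p r0 Est Hp Hr0 Hred.
  case: Est => Ep Er; subst p r0; split => //.
  congr I: HI0.
  by apply: functional_extensionality => u; rewrite /psub /padd /pzero add0r subrr.
subst st.
case: (Hst) => Hp0 [[g [t [dt [Gg [Ht [E1 [E2 [E3 [Ep' Er']]]]]]]]] | [Hnd [Ep' Er']]].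
- have Ht' : inSM V t by apply/inSM_ShM; exists dt.
  have Hgks := HIks _ (HGI _ Gg).
  have Hp' : inKS V p' by rewrite Ep'; apply: inKS_shift.
  have Hr0' : inKS V r0' by rewrite Er'.
  have Hred' : reduced G r0' by rewrite Er'.
  have [IH1 IH2 IH3] := IH p' r0' erefl Hp' Hr0' Hred'.
  split => //.
  have Hsh := I_shift (LC V ltM p / LC V ltM g) HI (HGI _ Gg) Ht'.
  have := HIadd _ _ IH3 Hsh.
  congr I; apply: functional_extensionality => u.
  rewrite /padd /psub Ep' Er' /psub; ring.
- have Hp' : inKS V p' by rewrite Ep'; apply: inKS_subLT.
  have Hr0' : inKS V r0' by rewrite Er'; apply: inKS_addLT.
  have Hred' : reduced G r0'.
    move=> s; rewrite Er' /padd LT_eq; case: (s =P LM V ltM p) => [->|_].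
      by move=> _; apply: Hnd.
    by rewrite addr0; apply: Hred.
  have [IH1 IH2 IH3] := IH p' r0' erefl Hp' Hr0' Hred'.
  split => //.
  move: IH3; congr I; apply: functional_extensionality => u.
  rewrite /padd /psub Ep' Er' /padd /psub; ring.
Qed.

Lemma rem_inv (G I : poly -> Prop) f r : is_ideal V I -> (forall g, G g -> I g) ->
  inKS V f -> remainder V ltM G f r ->
  [/\ inKS V r, reduced G r & I (psub (padd f (@pzero n K)) r)].
Proof.
move=> HI HGI Hf Hr; apply: (run_inv HI HGI Hr erefl Hf) => //.
split; [exists [::]|] => s; rewrite /pzero eqxx //.
by move=> s; rewrite /pzero eqxx.
Qed.

Lemma unique_rem (G G' I : poly -> Prop) : is_ideal V I ->
  sparse_groebner V ltM G I -> sparse_groebner V ltM G' I ->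
  forall f f' r r', inKS V f -> inKS V f' -> I (psub f f') ->
  remainder V ltM G f r -> remainder V ltM G' f' r' -> r = r'.
Proof.
move=> HI [HG1 _ HG3] [HG1' _ HG3'] f f' r r' Hf Hf' Hff' Hr Hr'.
have [HIks HI0 HIadd HImul] := HI.
have [Hr1 Hr2 Hr3] := rem_inv HI HG1 Hf Hr.
have [Hr1' Hr2' Hr3'] := rem_inv HI HG1' Hf' Hr'.
have Hd : I (psub r r').
  have := HIadd _ _ (HIadd _ _ (I_neg HI Hr3) Hff') Hr3'.
  congr I; apply: functional_extensionality => u.
  rewrite /padd /psub /pzero; ring.
case: (classic (psub r r' = @pzero n K)) => Hd0.
  apply: functional_extensionality => u; apply/eqP; rewrite -subr_eq0.
  by have := congr1 (fun h => h u) Hd0; rewrite /psub /pzero => ->.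
have [Hl _] := LMP Hmo (HIks _ Hd) Hd0.
move: (Hl); rewrite {1}/psub; case/nz_sub => Hnz.
  have [g [Gg Hdiv]] := HG3 _ Hd Hd0.
  by case: (Hr2 _ Hnz g Gg).
have [g [Gg Hdiv]] := HG3' _ Hd Hd0.
by case: (Hr2' _ Hnz g Gg).
Qed.

End S5.

Theorem mainTheorem1
  (K : fieldType) (n : nat) (V : seq 'rV[R]_n)
  (ltM : 'rV[int]_n -> 'rV[int]_n -> Prop) :
  [pchar K] =i pred0 ->
  inPolytope V 0 ->
  SM_pointed V ->
  monomial_order V ltM ->
  forall (G : spoly n K -> Prop) (f : spoly n K),
    (forall g, G g -> inKS V g /\ g <> @pzero n K) ->
    inKS V f ->
    div_terminates V ltM G f /\
    (forall I : spoly n K -> Prop,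
       is_ideal V I -> sparse_groebner V ltM G I ->
       (forall f' : spoly n K, inKS V f' -> I (psub f f') ->
          forall r r', remainder V ltM G f r -> remainder V ltM G f' r' ->
          r = r') /\
       (forall G' : spoly n K -> Prop,
          (forall g, G' g -> inKS V g /\ g <> @pzero n K) ->
          sparse_groebner V ltM G' I ->
          forall r r', remainder V ltM G f r -> remainder V ltM G' f r' ->
          r = r')).
Proof.
move=> _ _ _ Hmo G f HG Hf; split; first exact: terminates.
move=> I HI HGb; split.
  move=> f' Hf' Hff' r r' Hr Hr'.
  exact: (unique_rem Hmo HI HGb HGb Hf Hf' Hff' Hr Hr').
move=> G' _ HGb' r r' Hr Hr'.
apply: (unique_rem Hmo HI HGb HGb' Hf Hf _ Hr Hr').
have [_ HI0 _ _] := HI; congr I: HI0.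
by apply: functional_extensionality => u; rewrite /psub /pzero subrr.
Qed.
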